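(* For every $c>0$ there exists $c'>0$ such that for all $\phi\in X_G$ with $|\phi(t)|\le c$ for all $t\in[-r,0]$ and for all $t\in[-r,t_\phi)$ we have $|x^\phi(t)|\le c'$.
   Context: Constants $\beta,\mu,\gamma,a>0$. The function $g:\mathbb{R}\to(0,\infty)$ is continuously differentiable with $0<g_0:=\inf g(\mathbb{R})\le \sup g(\mathbb{R})=g_U<\infty$. The function $v:\mathbb{R}\to\mathbb{R}$ is continuously differentiable with $0<v_0\le v(x)\le v_U$ for all $x$. Fix $r>a/v_0$; $C=C([-r,0],\mathbb{R})$, $C^1=C^1([-r,0],\mathbb{R})$ with norm $|\phi|_1=\max|\phi|+\max|\phi'|$. For a function $x$ defined on an interval containing $[t-r,t]$, the segment $x_t\in C$ is $x_t(s)=x(t+s)$. For $\phi\in C$ let $\delta(\phi)$ be the unique $u\in(0,r)$ with $a=\int_{-u}^0 v(\phi(s))\,ds$. Define $G:C^1\to\mathbb{R}$ by $$G(\phi)=\beta e^{-\mu\delta(\phi)}\frac{v(\phi(0))}{v(\phi(-\delta(\phi)))}g(\phi(-\delta(\phi)))-\gamma\phi(0),$$ and $X_G=\{\phi\in C^1:\phi'(0)=G(\phi)\}$. Each $\phi\in X_G$ determines a unique maximal continuously differentiable solution $x^\phi:[-r,t_\phi)\to\mathbb{R}$, $0<t_\phi\le\infty$, of $x'(t)=G(x_t)$ for $0<t<t_\phi$, $x_0=\phi$ (every other such solution with $x_0=\phi$ is a restriction of $x^\phi$). *)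

(* Defs.v *)
From Stdlib Require Import Reals Lra ClassicalEpsilon.
From Coquelicot Require Import Coquelicot.
Open Scope R_scope.

Definition deriv_within (D : R -> Prop) (f : R -> R) (t l : R) : Prop :=
  forall eps : R, 0 < eps -> exists delta : R, 0 < delta /\
    forall h : R, D (t + h) -> h <> 0 -> Rabs h < delta ->
      Rabs ((f (t + h) - f t) / h - l) <= eps.

Definition cont_within (D : R -> Prop) (f : R -> R) (t : R) : Prop :=
  forall eps : R, 0 < eps -> exists delta : R, 0 < delta /\
    forall s : R, D s -> Rabs (s - t) < delta -> Rabs (f s - f t) <= eps.

Definition C1_on (D : R -> Prop) (f : R -> R) : Prop :=
  exists f' : R -> R,
    (forall t, D t -> deriv_within D f t (f' t)) /\
    (forall t, D t -> cont_within D f' t).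

Definition Iseg (r : R) : R -> Prop := fun s => -r <= s <= 0.

Definition seg (x : R -> R) (t : R) : R -> R := fun s => x (t + s).

Definition delay (a r : R) (v : R -> R) (phi : R -> R) : R :=
  epsilon (inhabits 0)
    (fun u => 0 < u < r /\ a = RInt (fun s => v (phi s)) (- u) 0).

Definition Gfun (beta mu gamma a r : R) (g v : R -> R) (phi : R -> R) : R :=
  let d := delay a r v phi in
  beta * exp (- mu * d) * (v (phi 0) / v (phi (- d))) * g (phi (- d))
  - gamma * phi 0.

Definition in_XG (beta mu gamma a r : R) (g v : R -> R) (phi : R -> R) : Prop :=
  C1_on (Iseg r) phi /\
  deriv_within (Iseg r) phi 0 (Gfun beta mu gamma a r g v phi).

Definition is_solution (beta mu gamma a r : R) (g v : R -> R)
    (phi : R -> R) (x : R -> R) (T : Rbar) : Prop :=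
  Rbar_lt 0 T /\
  C1_on (fun t => -r <= t /\ Rbar_lt t T) x /\
  (forall s, Iseg r s -> x s = phi s) /\
  (forall t, 0 < t -> Rbar_lt t T ->
     deriv_within (fun t => -r <= t /\ Rbar_lt t T) x t
       (Gfun beta mu gamma a r g v (seg x t))).

Definition is_max_solution (beta mu gamma a r : R) (g v : R -> R)
    (phi : R -> R) (x : R -> R) (T : Rbar) : Prop :=
  is_solution beta mu gamma a r g v phi x T /\
  forall (y : R -> R) (T' : Rbar), is_solution beta mu gamma a r g v phi y T' ->
    Rbar_le T' T /\ (forall t, -r <= t -> Rbar_lt t T' -> y t = x t).

(* Main.v *)
Require Import Defs.
From Stdlib Require Import Reals Lra ClassicalEpsilon.
From Coquelicot Require Import Coquelicot.
Open Scope R_scope.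

Lemma unfold_cpt (f : R -> R) t :
  (forall eps, 0 < eps -> exists alp, 0 < alp /\ forall s, Rabs (s - t) < alp -> Rabs (f s - f t) < eps) ->
  continuity_pt f t.
Proof.
  intros H. unfold continuity_pt, continue_in, limit1_in, limit_in. simpl. unfold R_dist.
  intros eps He. destruct (H eps He) as [alp [Ha Hs]]. exists alp; split; auto.
  intros s [_ Hs2]. apply Hs; auto.
Qed.

Lemma lip_cont (f : R -> R) L : 0 < L ->
  (forall a b, Rabs (f a - f b) <= L * Rabs (a - b)) -> continuity f.
Proof.
  intros HL H t. apply unfold_cpt. intros eps He. exists (eps / L). split.
  - apply Rdiv_lt_0_compat; auto.
  - intros s Hs. eapply Rle_lt_trans. apply H.
    apply Rmult_lt_compat_l with (r := L) in Hs; auto.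
    replace (L * (eps / L)) with eps in Hs by (field; lra). exact Hs.
Qed.

Lemma cont_from_deriv (D : R -> Prop) f t l : deriv_within D f t l ->
  (exists e, 0 < e /\ forall s, Rabs (s - t) < e -> D s) -> continuity_pt f t.
Proof.
  intros Hd [e [He HD]]. apply unfold_cpt. intros eps Heps.
  destruct (Hd 1 Rlt_0_1) as [d0 [Hd0 Hq]].
  set (K := Rabs l + 1).
  assert (HK : 0 < K) by (unfold K; pose proof (Rabs_pos l); lra).
  exists (Rmin d0 (Rmin e (eps / K))). split.
  - apply Rmin_pos; auto. apply Rmin_pos; auto. apply Rdiv_lt_0_compat; auto.
  - intros s Hs.
    assert (H1 : Rabs (s - t) < d0) by (eapply Rlt_le_trans; [exact Hs| apply Rmin_l]).
    assert (H2 : Rabs (s - t) < e) by (eapply Rlt_le_trans; [exact Hs| eapply Rle_trans; [apply Rmin_r| apply Rmin_l]]).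
    assert (H3 : Rabs (s - t) < eps / K) by (eapply Rlt_le_trans; [exact Hs| eapply Rle_trans; [apply Rmin_r| apply Rmin_r]]).
    destruct (Req_dec s t) as [E|E].
    + subst. replace (f t - f t) with 0 by ring. rewrite Rabs_R0; auto.
    + set (h := s - t).
      assert (Hh : h <> 0) by (unfold h; lra).
      specialize (Hq h). replace (t + h) with s in Hq by (unfold h; ring).
      specialize (Hq (HD s H2) Hh H1).
      set (q := (f s - f t) / h) in Hq.
      assert (Eq : f s - f t = q * h) by (unfold q; field; auto).
      rewrite Eq, Rabs_mult.
      assert (Hq' : Rabs q <= K).
      { unfold K. replace q with ((q - l) + l) by ring.
        eapply Rle_trans. apply Rabs_triang. lra. }
      apply Rmult_lt_compat_l with (r := K) in H3; auto.
      replace (K * (eps / K)) with eps in H3 by (field; lra).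
      fold h in H3.
      eapply Rle_lt_trans; [| exact H3].
      apply Rmult_le_compat_r. apply Rabs_pos. exact Hq'.
Qed.

Lemma clamp_prop r u : 0 < r -> 0 <= Rmax 0 (Rmin r u) <= r.
Proof. intros. unfold Rmax, Rmin; repeat destruct Rle_dec; lra. Qed.

Lemma clamp_lip r a b : 0 < r -> Rabs (Rmax 0 (Rmin r a) - Rmax 0 (Rmin r b)) <= Rabs (a - b).
Proof. intros. unfold Rmax, Rmin; repeat destruct Rle_dec; unfold Rabs; repeat destruct Rcase_abs; lra. Qed.

Lemma clamp_id r u : 0 <= u <= r -> Rmax 0 (Rmin r u) = u.
Proof. intros. unfold Rmax, Rmin; repeat destruct Rle_dec; lra. Qed.

Lemma delay_ok (a r : R) (v : R -> R) (v0 vU : R) (y : R -> R) :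
  0 < a -> 0 < v0 -> (forall x, v0 <= v x <= vU) -> a / v0 < r ->
  (forall x, continuous v x) -> (forall s, -r <= s <= 0 -> continuous y s) ->
  0 < delay a r v y < r.
Proof.
  intros ha hv0 hv hr hvc hyc.
  set (w := fun s => v (y s)).
  assert (Hw : forall s, -r <= s <= 0 -> continuous w s).
  { intros s Hs. unfold w. apply continuous_comp; auto. }
  assert (hr0 : 0 < r).
  { apply Rlt_trans with (a / v0); auto. apply Rdiv_lt_0_compat; auto. }
  assert (hvU : 0 < vU) by (specialize (hv 0); lra).
  assert (Hex : ex_RInt w (-r) 0).
  { apply (@ex_RInt_continuous R_CompleteNormedModule). intros z Hz. apply Hw.
    rewrite Rmin_left in Hz by lra. rewrite Rmax_right in Hz by lra. exact Hz. }
  assert (Hexpq : forall p q, -r <= p <= q -> q <= 0 -> ex_RInt w p q).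
  { intros p q H1 H2. apply (@ex_RInt_Chasles_1 R_CompleteNormedModule) with 0. lra.
    apply (@ex_RInt_Chasles_2 R_CompleteNormedModule) with (-r). lra. exact Hex. }
  assert (Hex2 : forall p q, -r <= p <= 0 -> -r <= q <= 0 -> ex_RInt w p q).
  { intros p q Hp Hq. destruct (Rle_dec p q). apply Hexpq; lra.
    apply (@ex_RInt_swap R_CompleteNormedModule). apply Hexpq; lra. }
  assert (Hb : forall p q, -r <= p <= 0 -> -r <= q <= 0 -> Rabs (RInt w p q) <= vU * Rabs (q - p)).
  { intros p q Hp Hq.
    assert (Hwb : forall t, Rabs (w t) <= vU).
    { intros t. unfold w. specialize (hv (y t)). rewrite Rabs_right by lra. lra. }
    destruct (Rle_dec p q).
    - rewrite (Rabs_right (q - p)) by lra. rewrite Rmult_comm.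
      apply abs_RInt_le_const; [lra | apply Hexpq; lra | intros; apply Hwb].
    - rewrite <- (@opp_RInt_swap R_CompleteNormedModule w q p) by (apply Hexpq; lra).
      change (Rabs (- RInt w q p) <= vU * Rabs (q - p)). rewrite Rabs_Ropp.
      rewrite (Rabs_left1 (q - p)) by lra. replace (- (q - p)) with (p - q) by ring.
      rewrite Rmult_comm. apply abs_RInt_le_const; [lra| apply Hexpq; lra |intros; apply Hwb]. }
  set (U := fun u => RInt w (- Rmax 0 (Rmin r u)) 0 - a).
  assert (HU : continuity U).
  { apply lip_cont with vU; auto. intros x1 x2. unfold U.
    pose proof (clamp_prop r x1 hr0). pose proof (clamp_prop r x2 hr0).
    set (c1 := Rmax 0 (Rmin r x1)) in *. set (c2 := Rmax 0 (Rmin r x2)) in *.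
    assert (E : RInt w (-c1) 0 - a - (RInt w (-c2) 0 - a) = RInt w (-c1) (-c2)).
    { assert (C := @RInt_Chasles R_CompleteNormedModule w (-c1) (-c2) 0 (Hex2 (-c1) (-c2) ltac:(lra) ltac:(lra)) (Hex2 (-c2) 0 ltac:(lra) ltac:(lra))).
      change (RInt w (-c1)(-c2) + RInt w (-c2) 0 = RInt w (-c1) 0) in C. lra. }
    rewrite E. eapply Rle_trans. apply Hb; lra.
    apply Rmult_le_compat_l. lra.
    replace (- c2 - - c1) with (c1 - c2) by ring. apply clamp_lip; auto. }
  assert (HU0 : U 0 = - a).
  { unfold U. rewrite clamp_id by lra. rewrite Ropp_0, RInt_point. change (0 - a = - a). ring. }
  assert (HUr : 0 < U r).
  { unfold U. rewrite clamp_id by lra.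
    assert (L : RInt (fun _ => v0) (-r) 0 <= RInt w (-r) 0).
    { apply RInt_le. lra. apply ex_RInt_const. exact Hex. intros z Hz. unfold w. apply hv. }
    rewrite RInt_const in L. change ((0 - - r) * v0 <= RInt w (- r) 0) in L.
    assert (a < r * v0).
    { apply Rmult_lt_compat_r with (r := v0) in hr; auto.
      replace (a / v0 * v0) with a in hr by (field; lra). exact hr. }
    lra. }
  destruct (IVT U 0 r HU hr0 ltac:(lra) HUr) as [z [Hz Hz0]].
  unfold delay. apply (epsilon_spec (inhabits 0) (fun u => 0 < u < r /\ a = RInt (fun s => v (y s)) (- u) 0)). exists z.
  unfold U in Hz0. rewrite clamp_id in Hz0 by lra.
  assert (z <> 0). { intro E. subst z. unfold U in HU0. rewrite clamp_id in HU0 by lra. lra. }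
  assert (z <> r). { intro E. subst z. unfold U in HUr. rewrite clamp_id in HUr by lra. lra. }
  split. lra. unfold w in Hz0. lra.
Qed.

Lemma lmax (D : R -> Prop) f p l k : 0 < k -> deriv_within D f p l ->
  (forall h, -k < h < 0 -> D (p + h) /\ f (p + h) <= f p) -> 0 <= l.
Proof.
  intros hk Hd H. destruct (Rle_lt_dec 0 l) as [|Hl]; auto. exfalso.
  destruct (Hd (-l/2) ltac:(lra)) as [d [hd Hq]].
  set (h := - Rmin (d/2) (k/2)).
  assert (Hm : 0 < Rmin (d/2) (k/2)) by (apply Rmin_pos; lra).
  assert (Hm1 := Rmin_l (d/2) (k/2)). assert (Hm2 := Rmin_r (d/2) (k/2)).
  assert (hh : -k < h < 0) by (unfold h; lra).
  destruct (H h hh) as [HD Hf].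
  assert (Ha : Rabs h < d) by (rewrite Rabs_left by lra; unfold h; lra).
  specialize (Hq h HD ltac:(lra) Ha).
  set (q := (f (p + h) - f p) / h) in Hq.
  assert (Eq : q * h = f (p + h) - f p) by (unfold q; field; lra).
  assert (q >= 0) by nra.
  apply Rabs_le_between in Hq. lra.
Qed.

Lemma lmin (D : R -> Prop) f p l k : 0 < k -> deriv_within D f p l ->
  (forall h, -k < h < 0 -> D (p + h) /\ f p <= f (p + h)) -> l <= 0.
Proof.
  intros hk Hd H. destruct (Rle_lt_dec l 0) as [|Hl]; auto. exfalso.
  destruct (Hd (l/2) ltac:(lra)) as [d [hd Hq]].
  set (h := - Rmin (d/2) (k/2)).
  assert (Hm : 0 < Rmin (d/2) (k/2)) by (apply Rmin_pos; lra).
  assert (Hm1 := Rmin_l (d/2) (k/2)). assert (Hm2 := Rmin_r (d/2) (k/2)).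
  assert (hh : -k < h < 0) by (unfold h; lra).
  destruct (H h hh) as [HD Hf].
  assert (Ha : Rabs h < d) by (rewrite Rabs_left by lra; unfold h; lra).
  specialize (Hq h HD ltac:(lra) Ha).
  set (q := (f (p + h) - f p) / h) in Hq.
  assert (Eq : q * h = f (p + h) - f p) by (unfold q; field; lra).
  assert (q <= 0) by nra.
  apply Rabs_le_between in Hq. lra.
Qed.

Lemma nbhd (r : R) (T : Rbar) s : -r < s -> Rbar_lt s T ->
  exists e, 0 < e /\ forall s', Rabs (s' - s) < e -> -r <= s' /\ Rbar_lt s' T.
Proof.
  intros h1 h2. destruct T as [T0| |]; simpl in h2.
  - exists (Rmin (s + r) (T0 - s)). split. apply Rmin_pos; lra.
    intros s' Hs. assert (A1 := Rmin_l (s + r) (T0 - s)). assert (A2 := Rmin_r (s + r) (T0 - s)).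
    apply Rabs_def2 in Hs. simpl. lra.
  - exists (s + r). split. lra. intros s' Hs. apply Rabs_def2 in Hs. simpl. split; auto; lra.
  - contradiction.
Qed.

Lemma Rbar_lt_le s s' (T : Rbar) : s <= s' -> Rbar_lt s' T -> Rbar_lt s T.
Proof. intros. destruct T; simpl in *; auto; lra. Qed.

Lemma seg_cont (x : R -> R) p s : continuity_pt x (p + s) -> continuity_pt (seg x p) s.
Proof.
  intros H. unfold seg. apply (continuity_pt_comp (fun s => p + s) x). 
  apply derivable_continuous_pt. reg. exact H.
Qed.

Theorem proposition3p1
  (beta mu gamma a : R) (g v : R -> R) (g0 gU v0 vU r : R)
  (hbeta : 0 < beta) (hmu : 0 < mu) (hgamma : 0 < gamma) (ha : 0 < a)
  (hg_C1 : forall x, ex_derive g x /\ continuous (Derive g) x)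
  (hg0 : 0 < g0) (hg : forall x, g0 <= g x <= gU)
  (hv_C1 : forall x, ex_derive v x /\ continuous (Derive v) x)
  (hv0 : 0 < v0) (hv : forall x, v0 <= v x <= vU)
  (hr : a / v0 < r) :
  forall c : R, 0 < c -> exists c' : R, 0 < c' /\
    forall (phi : R -> R), in_XG beta mu gamma a r g v phi ->
      (forall t, -r <= t <= 0 -> Rabs (phi t) <= c) ->
      forall (x : R -> R) (T : Rbar),
        is_max_solution beta mu gamma a r g v phi x T ->
        forall t, -r <= t -> Rbar_lt t T -> Rabs (x t) <= c'.
Proof.
  intros c hc.
  assert (hr0 : 0 < r).
  { apply Rlt_trans with (a / v0); auto. apply Rdiv_lt_0_compat; auto. }
  set (K := beta * (vU / v0) * gU).
  set (M := Rmax c (K / gamma)).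
  assert (hM1 := Rmax_l c (K / gamma)). assert (hM2 := Rmax_r c (K / gamma)).
  fold M in hM1, hM2.
  assert (hgM : K <= gamma * M).
  { apply Rmult_le_compat_l with (r := gamma) in hM2; [|lra].
    replace (gamma * (K / gamma)) with K in hM2 by (field; lra). exact hM2. }
  exists M. split. lra.
  intros phi _ hphi x T [[hT0 [[x' [Hxd Hxc]] [Hinit Hode]]] _] t ht htT.
  assert (hvc : forall z, continuous v z) by (intros z; apply (@ex_derive_continuous R_AbsRing R_NormedModule), hv_C1).
  assert (contx : forall s, -r < s -> Rbar_lt s T -> continuity_pt x s).
  { intros s h1 h2. apply cont_from_deriv with (D := fun t => -r <= t /\ Rbar_lt t T) (l := x' s).
    apply Hxd. split; auto; lra. apply nbhd; auto. }
  assert (Gb : forall p, 0 < p -> Rbar_lt p T ->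
     0 <= Gfun beta mu gamma a r g v (seg x p) + gamma * x p <= K).
  { intros p hp hpT.
    assert (Hd : 0 < delay a r v (seg x p) < r).
    { apply (delay_ok a r v v0 vU); auto. intros s Hs.
      apply continuity_pt_filterlim. apply seg_cont. apply contx.
      lra. apply Rbar_lt_le with p; auto; lra. }
    unfold Gfun. set (d := delay a r v (seg x p)) in *.
    unfold seg. rewrite Rplus_0_r.
    set (V1 := v (x p)). set (V2 := v (x (p + - d))). set (G := g (x (p + - d))).
    set (E := exp (- mu * d)).
    assert (hE : 0 < E <= 1).
    { unfold E. split. apply exp_pos. rewrite <- exp_0. left. apply exp_increasing. nra. }
    assert (h1 : v0 <= V1 <= vU) by apply hv.
    assert (h2 : v0 <= V2 <= vU) by apply hv.
    assert (h3 : g0 <= G <= gU) by apply hg.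
    assert (hB : 0 < V1 / V2 <= vU / v0).
    { split. apply Rdiv_lt_0_compat; lra. unfold Rdiv.
      apply Rmult_le_compat; try lra. left; apply Rinv_0_lt_compat; lra.
      apply Rinv_le_contravar; lra. }
    replace (beta * E * (V1 / V2) * G - gamma * x p + gamma * x p)
      with (beta * E * (V1 / V2) * G) by ring.
    split.
    - left. apply Rmult_lt_0_compat; [apply Rmult_lt_0_compat; [apply Rmult_lt_0_compat|]|]; lra.
    - unfold K. set (B := V1 / V2) in *. clearbody B E G.
      assert (beta * E <= beta * 1) by (apply Rmult_le_compat_l; lra).
      assert (0 < beta * E) by (apply Rmult_lt_0_compat; lra).
      assert (0 < beta * E * B) by (apply Rmult_lt_0_compat; lra).
      assert (beta * E * B <= beta * 1 * (vU / v0)) by (apply Rmult_le_compat; lra).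
      assert (beta * E * B * G <= beta * 1 * (vU / v0) * gU) by (apply Rmult_le_compat; lra).
      lra. }
  destruct (Rle_lt_dec t 0) as [ht0|ht0].
  - rewrite Hinit by (unfold Iseg; lra). eapply Rle_trans. apply hphi; lra. lra.
  - assert (hx0 : x 0 = phi 0) by (apply Hinit; unfold Iseg; lra).
    assert (hphi0 := hphi 0 ltac:(lra)). apply Rabs_le_between in hphi0.
    assert (ccont : forall s, 0 <= s <= t -> continuity_pt x s).
    { intros s Hs. apply contx. lra. apply Rbar_lt_le with t; auto; lra. }
    apply Rabs_le. split.
    + destruct (Rle_lt_dec (- M) (x t)) as [|Hlt]; auto. exfalso.
      destruct (continuity_ab_min x 0 t ltac:(lra) ccont) as [p [Hp1 Hp2]].
      assert (Hxp := Hp1 t ltac:(lra)).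
      assert (hp : 0 < p).
      { destruct (Req_dec p 0) as [E|E]; [|lra]. subst p. lra. }
      assert (hpT : Rbar_lt p T) by (apply Rbar_lt_le with t; auto; lra).
      assert (Hl := lmin _ _ p _ p hp (Hode p hp hpT)).
      destruct (Gb p hp hpT) as [G1 G2].
      assert (Gfun beta mu gamma a r g v (seg x p) <= 0 ).
      { apply Hl. intros h Hh. split. split. lra. apply Rbar_lt_le with p; auto; lra.
        apply Hp1. lra. }
      nra.
    + destruct (Rle_lt_dec (x t) M) as [|Hlt]; auto. exfalso.
      destruct (continuity_ab_maj x 0 t ltac:(lra) ccont) as [p [Hp1 Hp2]].
      assert (Hxp := Hp1 t ltac:(lra)).
      assert (hp : 0 < p).
      { destruct (Req_dec p 0) as [E|E]; [|lra]. subst p. lra. }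
      assert (hpT : Rbar_lt p T) by (apply Rbar_lt_le with t; auto; lra).
      assert (Hl := lmax _ _ p _ p hp (Hode p hp hpT)).
      destruct (Gb p hp hpT) as [G1 G2].
      assert (0 <= Gfun beta mu gamma a r g v (seg x p)).
      { apply Hl. intros h Hh. split. split. lra. apply Rbar_lt_le with p; auto; lra.
        apply Hp1. lra. }
      nra.
Qed.
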